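(* Let $G=(V,E)$ be a network and consider a rate-$\omega$ LNEC code over a finite field $\mathbb{F}$ on $G$, as described in the context. Let $t$ be a sink node with $C_t\ge\omega$ and let $r$ be a nonnegative integer with $r\le C_t-\omega$. Then $$\Phi(t)\cap\Delta(t,\xi)=\{0\}\quad\text{for all }\xi\in\mathcal{E}_t(r)$$ if and only if $$\Phi(t)\cap\Delta(t,\xi)=\{0\}\quad\text{for all }\xi\in\mathcal{A}_t(r).$$
   Context: Network: $G=(V,E)$ is a finite directed acyclic graph (parallel edges allowed) with a single source node $s$ and a set of sink nodes $T\subseteq V\setminus\{s\}$; $s$ has no incoming edges and sink nodes have no outgoing edges. For an edge $e$, $\mathrm{tail}(e)$, $\mathrm{head}(e)$ are its tail and head; $\mathrm{In}(v)$, $\mathrm{Out}(v)$ are the incoming/outgoing edge sets of node $v$. A directed path is a sequence of edges $(e_1,\dots,e_m)$, $m\ge1$, with $\mathrm{tail}(e_{k+1})=\mathrm{head}(e_k)$. A cut separating node $v$ from node $u$ is a set of edges whose removal leaves no directed path from $u$ to $v$; $C_t$ is the minimum size of a cut separating sink $t$ from $s$. LNEC code: with rate $\omega\ge1$ and finite field $\mathbb{F}$, introduce imaginary source edges $d_1',\dots,d_\omega'$ ending at $s$ with $\mathrm{In}(s)=\{d_1',\dots,d_\omega'\}$, and for each $e\in E$ an imaginary error edge $e'$ with head $\mathrm{tail}(e)$; $E'=\{e':e\in E\}$ (for non-source nodes, $\mathrm{In}(v)$ contains only edges of $E$). The code is given by local encoding coefficients $k_{d,e}\in\mathbb{F}$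 for $e\in E$, $d\in\mathrm{In}(\mathrm{tail}(e))$. Extended global encoding kernels are vectors in $\mathbb{F}^{\omega+|E|}$ indexed by $\{d_i'\}\cup E'$: $\tilde f_{d_i'}=1_{d_i'}$, $\tilde f_{e'}=1_{e'}$ (standard basis vectors), and recursively in topological order $\tilde f_e=\sum_{d\in\mathrm{In}(\mathrm{tail}(e))}k_{d,e}\tilde f_d+1_{e'}$. For sink $t$, $\mathrm{row}_t(d')=(\tilde f_{\hat e}(d'):\hat e\in\mathrm{In}(t))$. Message space $\Phi(t)=\langle\mathrm{row}_t(d_i'):1\le i\le\omega\rangle$; error space of $\xi\subseteq E$: $\Delta(t,\xi)=\langle\mathrm{row}_t(e'):e\in\xi\rangle$ (spans in $\mathbb{F}^{|\mathrm{In}(t)|}$). Graph notions: for $\xi\subseteq E$ and a node $u$, $A\subseteq E$ is a cut separating $u$ from $\xi$ if every directed path in $G$ whose first edge lies in $\xi$ and whose last edge has head $u$ contains an edge of $A$ (equivalently, $A$ separates $\xi$ from $u$ in the reversed network). $\mathrm{mincut}(\xi,u)$ is the minimum size of such a cut; a cut of that size is a minimum cut separating $u$ from $\xi$. A minimum cut separating $u$ from $\xi$ is primary if it separates $u$ from every minimum cut separating $u$ from $\xi$; it exists and is unique. $\xi$ is primary for $u$ if $\xi$ is the primary minimum cut separating $u$ from $\xi$. For a sink $t$ and integer $r\ge0$: $\mathcal{E}_t(r)=\{\xi\subseteq E:\mathrm{mincut}(\xi,t)\le r\}$ and $\mathcal{A}_t(r)=\{\xi\subseteq E:|\xi|=r,\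 \xi\text{ primary for }t\}$. *)

(* Defs.v *)
From mathcomp Require Import all_boot all_algebra.
Set Implicit Arguments. Unset Strict Implicit. Unset Printing Implicit Defensive.
Import GRing.Theory.
Local Open Scope ring_scope.

Section Network.
Variables (V E : finType) (tail head : E -> V).

Definition is_dpath (p : seq E) : bool :=
  if p is e :: p' then path (fun d e' => head d == tail e') e p' else false.

Definition acyclic : Prop :=
  forall e p, is_dpath (e :: p) -> tail e != head (last e p).

Definition st_cut (s t : V) (A : {set E}) : Prop :=
  forall e p, is_dpath (e :: p) -> tail e = s -> head (last e p) = t ->
    has (fun d => d \in A) (e :: p).

Definition Ct_ge (s t : V) (k : nat) : Prop :=
  forall A, st_cut s t A -> (k <= #|A|)%N.

Definition cut_from (xi : {set E}) (u : V) (A : {set E}) : Prop :=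
  forall e p, is_dpath (e :: p) -> e \in xi -> head (last e p) = u ->
    has (fun d => d \in A) (e :: p).

Definition mincut_le (xi : {set E}) (u : V) (r : nat) : Prop :=
  exists A, cut_from xi u A /\ (#|A| <= r)%N.

Definition min_cut_from (xi : {set E}) (u : V) (A : {set E}) : Prop :=
  cut_from xi u A /\ forall B, cut_from xi u B -> (#|A| <= #|B|)%N.

Definition primary_cut (xi : {set E}) (u : V) (A : {set E}) : Prop :=
  min_cut_from xi u A /\ forall B, min_cut_from xi u B -> cut_from B u A.

Definition primary_for (xi : {set E}) (u : V) : Prop := primary_cut xi u xi.

Definition in_Ecal (t : V) (r : nat) (xi : {set E}) : Prop := mincut_le xi t r.
Definition in_Acal (t : V) (r : nat) (xi : {set E}) : Prop :=
  #|xi| = r /\ primary_for xi t.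

Definition In_edges (v : V) : {set E} := [set e | head e == v].

(* LNEC code data: field F, rate w, source s.
   Coordinates of extended kernels are indexed by Idx = {d_i'} + E',
   encoded as the sum type 'I_w + E (inl i = d_i', inr e = e'). *)
Variables (F : fieldType) (w : nat) (s : V).
Definition Idx := ('I_w + E)%type.

(* f is the family of extended global encoding kernels of the code with
   local encoding coefficients ksrc i e = k_{d_i',e} (relevant when tail e = s)
   and kE d e = k_{d,e} (relevant when head d = tail e):
   f_e = sum_{d in In(tail e)} k_{d,e} f_d + 1_{e'}, where In(s) = {d_i'}
   (with f_{d_i'} = 1_{d_i'}) and In(v) for other v consists of real edges. *)
Definition is_ext_kernels (ksrc : 'I_w -> E -> F) (kE : E -> E -> F)
    (f : E -> Idx -> F) : Prop :=
  forall e (x : Idx),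
    f e x = (if tail e == s then \sum_(i < w) ksrc i e * (x == inl i)%:R else 0)
            + \sum_(d | head d == tail e) kE d e * f d x
            + (x == inr e)%:R.

(* Matrix whose rows are row_t(d_i'), i < w; columns indexed by In(t)
   (enumerated). Its row space is Phi(t). *)
Definition Phi_mx (f : E -> Idx -> F) (t : V) : 'M[F]_(w, #|In_edges t|) :=
  \matrix_(i < w, j < #|In_edges t|) f (enum_val j) (inl i).

(* Matrix whose rows are row_t(e'), e in xi. Its row space is Delta(t,xi). *)
Definition Delta_mx (f : E -> Idx -> F) (t : V) (xi : {set E})
    : 'M[F]_(#|xi|, #|In_edges t|) :=
  \matrix_(i < #|xi|, j < #|In_edges t|) f (enum_val j) (inr (enum_val i)).

End Network.

(* Main.v *)
Require Import Defs.
From mathcomp Require Import all_boot all_algebra.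
From Stdlib Require Import ClassicalEpsilon Classical.
From mathcomp Require Import zify.
Set Implicit Arguments. Unset Strict Implicit. Unset Printing Implicit Defensive.
Import GRing.Theory.
Local Open Scope ring_scope.

Definition cb (P : Prop) : bool :=
  if excluded_middle_informative P then true else false.
Lemma cbP (P : Prop) : reflect P (cb P).
Proof. rewrite /cb; case: excluded_middle_informative => H; constructor => //. Qed.

Definition reachb (V E : finType) (tail head : E -> V) (x d : E) : bool :=
  cb (exists p, is_dpath tail head (x :: p) /\ last x p = d).
Definition anc (V E : finType) (tail head : E -> V) (d : E) : {set E} :=
  [set x | reachb tail head x d].

Lemma anc_proper (V E : finType) (tail head : E -> V) d' d :
  acyclic tail head -> head d' == tail d ->
  anc tail head d' \proper anc tail head d.
Proof.
move=> Hac Hdd; apply/properP; split.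
  apply/subsetP => x; rewrite !inE => /cbP [p [Hp Hl]]; apply/cbP.
  exists (rcons p d); split; last by rewrite last_rcons.
  by rewrite /= rcons_path -/(is_dpath tail head (x :: p)) Hp /= Hl.
exists d; first by rewrite inE; apply/cbP; exists [::].
rewrite inE; apply/negP => /cbP [p [Hp Hl]].
have := Hac d p Hp; rewrite Hl; by rewrite eq_sym Hdd.
Qed.

Lemma ind_fwd (V E : finType) (tail head : E -> V) (P : E -> Prop) :
  acyclic tail head ->
  (forall d, (forall d', head d' == tail d -> P d') -> P d) -> forall d, P d.
Proof.
move=> Hac H d; move: {2}#|anc tail head d| (leqnn #|anc tail head d|) => n.
elim: n d => [|n IH] d Hn; apply: H => d' Hd'; have := proper_card (anc_proper Hac Hd').
  by rewrite ltnNge (leq_trans Hn).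
by move=> Hlt; apply: IH; rewrite -ltnS (leq_trans Hlt).
Qed.

Lemma ind_bwd (V E : finType) (tail head : E -> V) (P : E -> Prop) :
  acyclic tail head ->
  (forall e, (forall d, head e == tail d -> P d) -> P e) -> forall e, P e.
Proof.
move=> Hac H e; move: {2}#|~: anc tail head e| (leqnn #|~: anc tail head e|) => n.
elim: n e => [|n IH] e Hn; apply: H => d Hd; have := proper_card (anc_proper Hac Hd);
  have := cardsC (anc tail head e); have := cardsC (anc tail head d).
  move=> h1 h2 h3; have : (#|~: anc tail head e| > 0)%N by lia. by rewrite ltnNge Hn.
move=> h1 h2 h3; apply: IH; lia.
Qed.

Definition Qc (V E : finType) (tail head : E -> V) (t : V) (C : {set E}) (e : E) :=
  forall p, is_dpath tail head (e :: p) -> head (last e p) = t ->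
    has (fun d => d \in C) (e :: p).
Definition Rset (V E : finType) (tail head : E -> V) (t : V) (C : {set E}) : {set E} :=
  [set e | cb (Qc tail head t C e)].

Lemma cut_iff (V E : finType) (tail head : E -> V) t xi A :
  cut_from tail head xi t A <-> xi \subset Rset tail head t A.
Proof.
split.
  move=> H; apply/subsetP => e He; rewrite inE; apply/cbP => p Hp Hl; exact: H.
move=> /subsetP H e p Hp He Hl; have := H e He; rewrite inE => /cbP; exact.
Qed.

Lemma sub_R (V E : finType) (tail head : E -> V) t (C : {set E}) : C \subset Rset tail head t C.
Proof.
apply/subsetP => e He; rewrite inE; apply/cbP => p _ _ /=; by rewrite He.
Qed.

Lemma R_mono (V E : finType) (tail head : E -> V) t (B B' : {set E}) :
  B \subset B' -> Rset tail head t B \subset Rset tail head t B'.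
Proof.
move=> /subsetP HB; apply/subsetP => e; rewrite !inE => /cbP H; apply/cbP => p Hp Hl.
apply: sub_has (H p Hp Hl) => x; exact: HB.
Qed.

Lemma dpath_suffix (V E : finType) (tail head : E -> V) e p1 c p2 :
  is_dpath tail head (e :: p1 ++ c :: p2) -> is_dpath tail head (c :: p2).
Proof.
rewrite /= cat_path => /andP [_ /=]; by case/andP.
Qed.

Lemma R_trans (V E : finType) (tail head : E -> V) t (C B : {set E}) :
  cut_from tail head C t B -> Rset tail head t C \subset Rset tail head t B.
Proof.
move=> HC; apply/subsetP => e; rewrite !inE => /cbP H; apply/cbP => p Hp Hl.
have /hasP [c Hc HcC] := H p Hp Hl.
move: Hc Hp Hl; rewrite in_cons => /orP [/eqP Hce | Hc] Hp Hl.
  subst c.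
  exact: HC.
case/splitPr: Hc Hp Hl => p1 p2 Hp Hl.
have Hs := dpath_suffix Hp.
have Hl' : head (last c p2) = t by rewrite -Hl last_cat.
have := HC c p2 Hs HcC Hl'.
move=> /hasP [x Hx HxB]; apply/hasP; exists x => //.
by rewrite in_cons mem_cat Hx !orbT.
Qed.

Lemma In_R (V E : finType) (tail head : E -> V) t (B : {set E}) a :
  a \in In_edges head t -> a \in Rset tail head t B -> a \in B.
Proof.
rewrite !inE => /eqP Ha /cbP H; have := H [::] erefl Ha; by rewrite /= orbF.
Qed.

Lemma pad (E : finType) (B : {set E}) (r : nat) :
  (#|B| <= r <= #|[set: E]|)%N -> exists B' : {set E}, B \subset B' /\ #|B'| = r.
Proof.
move=> /andP [H1 H2]; move Hn : (r - #|B|)%N => n; move: Hn.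
elim: n B H1 => [|n IH] B H1 Hn.
  exists B; split => //; lia.
have : #|~: B| != 0%N by have := cardsC B; rewrite -cardsT; lia.
rewrite cards_eq0 => /set0Pn [x]; rewrite inE => Hx.
have Hc : #|x |: B| = #|B|.+1 by rewrite cardsU1 Hx.
have [||B' [HB' HB'r]] := IH (x |: B); [lia | lia |].
exists B'; split => //; apply: subset_trans HB'; exact: subsetUr.
Qed.
Local Open Scope ring_scope.

Lemma uniq0 (V E : finType) (tail head : E -> V) (F : fieldType) (kE : E -> E -> F)
  (psi : E -> F) : acyclic tail head ->
  (forall d, psi d = \sum_(d' | head d' == tail d) kE d' d * psi d') -> forall d, psi d = 0.
Proof.
move=> Hac H; apply: (ind_fwd Hac) => d IH; rewrite H big1 // => d' Hd'.
by rewrite IH // mulr0.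
Qed.

Lemma fE (V E : finType) (tail head : E -> V) (F : fieldType) (w : nat) (s : V)
  ksrc kE (f : E -> Idx E w -> F) :
  is_ext_kernels tail head s ksrc kE f -> forall e x,
  f e (inr x) = \sum_(d | head d == tail e) kE d e * f d (inr x) + (x == e)%:R.
Proof.
move=> Hf e x; rewrite Hf.
have -> : (inr x == inr e :> Idx E w) = (x == e) by [].
case: (tail e == s); last by rewrite add0r.
rewrite big1 ?add0r // => i _; by rewrite mulr0.
Qed.

Lemma sum_ind (E : finType) (F : fieldType) (P : pred E) (g : E -> F) e :
  \sum_(d | P d) g d * (d == e)%:R = if P e then g e else 0.
Proof.
rewrite big_mkcond (bigD1 e) //= eqxx mulr1 big1 ?addr0 // => d /negPf Hd.
by rewrite Hd mulr0; case: ifP.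
Qed.

Lemma fB (V E : finType) (tail head : E -> V) (F : fieldType) (w : nat) (s : V)
  ksrc kE (f : E -> Idx E w -> F) :
  acyclic tail head ->
  is_ext_kernels tail head s ksrc kE f -> forall e eh,
  f eh (inr e) = (eh == e)%:R + \sum_(d | tail d == head e) kE e d * f eh (inr d).
Proof.
move=> Hac Hf e.
pose psi eh := f eh (inr e) - (eh == e)%:R - \sum_(d | tail d == head e) kE e d * f eh (inr d).
suff H : forall eh, psi eh = 0.
  by move=> eh; have := H eh; rewrite /psi => /eqP; rewrite subr_eq0 subr_eq => /eqP ->; rewrite addrC.
apply: (uniq0 (kE := kE) Hac) => eh.
rewrite /psi.
have -> : \sum_(d | tail d == head e) kE e d * f eh (inr d) =
   \sum_(d' | head d' == tail eh) kE d' eh * (\sum_(d | tail d == head e) kE e d * f d' (inr d))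
   + (if head e == tail eh then kE e eh else 0).
  rewrite (eq_bigr (fun d => kE e d * (\sum_(d' | head d' == tail eh) kE d' eh * f d' (inr d))
      + kE e d * (d == eh)%:R)); last by move=> d _; rewrite (fE Hf eh d) mulrDr.
  rewrite big_split /= sum_ind eq_sym; congr (_ + _).
  rewrite (eq_bigr (fun d => \sum_(d' | head d' == tail eh) kE e d * (kE d' eh * f d' (inr d)))); last by move=> d _; rewrite big_distrr.
  rewrite exchange_big /=; apply: eq_bigr => d' _; rewrite big_distrr /=; apply: eq_bigr => d _.
  by rewrite mulrA mulrCA mulrA.
rewrite (fE Hf eh e) eq_sym.
rewrite [X in _ = X](eq_bigr (fun d' => kE d' eh * f d' (inr e) - kE d' eh * (d' == e)%:R
     - kE d' eh * (\sum_(d | tail d == head e) kE e d * f d' (inr d)))); last by move=> d _; rewrite /psi /= !mulrBr.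
rewrite !sumrB sum_ind.
by rewrite addrK opprD addrA addrAC.
Qed.
Local Open Scope ring_scope.

Definition vec (V E : finType) (head : E -> V) (F : fieldType) (w : nat)
  (f : E -> Idx E w -> F) (t : V) (e : E) : 'rV[F]_(#|In_edges head t|) :=
  \row_(j < #|In_edges head t|) f (enum_val j) (inr e).

Lemma Delta_row (V E : finType) (head : E -> V) (F : fieldType) (w : nat)
  (f : E -> Idx E w -> F) (t : V) (xi : {set E}) i :
  row i (Delta_mx head f t xi) = vec head f t (enum_val i).
Proof. by apply/rowP => j; rewrite !mxE. Qed.

Lemma vec_in (V E : finType) (tail head : E -> V) (F : fieldType) (w : nat) (s : V)
  ksrc kE (f : E -> Idx E w -> F) (t : V) (C : {set E}) :
  acyclic tail head -> is_ext_kernels tail head s ksrc kE f ->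
  forall e, Qc tail head t C e -> (vec head f t e <= Delta_mx head f t C)%MS.
Proof.
move=> Hac Hf; apply: (ind_bwd Hac) => e IH HQ.
case: (boolP (e \in C)) => He.
  rewrite -(enum_rankK_in He He) -Delta_row; exact: row_sub.
have -> : vec head f t e = \sum_(d | tail d == head e) kE e d *: vec head f t d.
  apply/rowP => j; rewrite summxE !mxE (fB Hac Hf).
  have -> : (enum_val j == e) = false.
    apply/negP => /eqP Hj; move: He; have := enum_valP j; rewrite inE Hj => /eqP Ht.
    by have := HQ [::] erefl Ht; rewrite /= orbF => ->.
  rewrite add0r; apply: eq_bigr => d _; by rewrite !mxE.
apply: summx_sub => d Hd; apply: scalemx_sub; apply: IH; first by rewrite eq_sym.
move=> p Hp Hl; have := HQ (d :: p).
rewrite /= (negPf He) /=; apply => //.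
by move: Hp; rewrite /= => ->; rewrite eq_sym Hd.
Qed.

Lemma Delta_sub (V E : finType) (tail head : E -> V) (F : fieldType) (w : nat) (s : V)
  ksrc kE (f : E -> Idx E w -> F) (t : V) (xi C : {set E}) :
  acyclic tail head -> is_ext_kernels tail head s ksrc kE f ->
  cut_from tail head xi t C -> (Delta_mx head f t xi <= Delta_mx head f t C)%MS.
Proof.
move=> Hac Hf Hc; apply/row_subP => i; rewrite Delta_row.
apply: (vec_in Hac Hf) => p Hp Hl; apply: Hc => //; exact: enum_valP.
Qed.
Unset Implicit Arguments. Set Strict Implicit.

Theorem theorem8
  (V E : finType) (tail head : E -> V) (s : V) (T : {set V})
  (F : finFieldType) (w : nat)
  (ksrc : 'I_w -> E -> F) (kE : E -> E -> F) (f : E -> Idx E w -> F)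
  (t : V) (r : nat) :
  acyclic tail head ->
  (forall e, head e != s) ->
  s \notin T ->
  (forall e, tail e \notin T) ->
  (0 < w)%N ->
  is_ext_kernels tail head s ksrc kE f ->
  t \in T ->
  Ct_ge tail head s t w ->
  Ct_ge tail head s t (r + w) ->
  (forall xi : {set E}, in_Ecal tail head t r xi ->
     (Phi_mx head f t :&: Delta_mx head f t xi)%MS = 0) <->
  (forall xi : {set E}, in_Acal tail head t r xi ->
     (Phi_mx head f t :&: Delta_mx head f t xi)%MS = 0).
Proof.
move=> Hac _ _ _ Hw Hf _ _ Hct; split.
  move=> H xi [Hcard [[Hc _] _]]; apply: H; exists xi; split => //; by rewrite Hcard.
move=> HA xi [A [HcA HAr]].
have HIn : st_cut tail head s t (In_edges head t).
  move=> e p Hp Hs Hl; apply/hasP; exists (last e p); first exact: mem_last.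
  by rewrite inE Hl.
have HInr := Hct _ HIn.
have HEr : (#|In_edges head t| <= #|[set: E]|)%N by apply: subset_leq_card; apply: subsetT.
have [C0 [HAC0 HC0r]] : exists C0 : {set E}, A \subset C0 /\ #|C0| = r.
  apply: pad; apply/andP; split => //; lia.
pose P := fun C : {set E} => cb (cut_from tail head xi t C /\ #|C| = r).
have HP0 : P C0.
  apply/cbP; split => //; apply/cut_iff; apply: (subset_trans _ (R_mono tail head t HAC0)).
  by apply/cut_iff.
case: (arg_maxnP (fun C => #|Rset tail head t C|) HP0) => C /cbP [HCc HCr] Hmax.
have L : forall B : {set E}, cut_from tail head C t B -> (#|B| <= r)%N ->
    Rset tail head t B \subset Rset tail head t C.
  move=> B HB HBr.
  have [B2 [HBB2 HB2r]] : exists B2 : {set E}, B \subset B2 /\ #|B2| = r.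
    apply: pad; apply/andP; split => //; lia.
  have HRB := R_trans HB.
  have HRB2 := R_mono tail head t HBB2.
  have HP2 : P B2.
    apply/cbP; split => //; apply/cut_iff.
    apply: (subset_trans _ (subset_trans HRB HRB2)); by apply/cut_iff.
  have Hle := Hmax B2 HP2.
  have /eqP Heq : Rset tail head t C == Rset tail head t B2.
    by rewrite eqEcard (subset_trans HRB HRB2); exact: Hle.
  by rewrite Heq.
have [a Ha HaC] : exists2 a, a \in In_edges head t & a \notin C.
  apply/subsetPn; apply/negP => Hs; have := subset_leq_card Hs; lia.
have Hprim : primary_for tail head C t.
  split; first split.
  - by apply/cut_iff; apply: sub_R tail head t _.
  - move=> B HB; rewrite HCr; rewrite leqNgt; apply/negP => HBr.
    have HB1 : cut_from tail head C t (a |: B).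
      have hsub : B \subset a |: B by apply/subsetP => x Hx; rewrite in_setU1 Hx orbT.
      apply/cut_iff; apply: (subset_trans _ (R_mono tail head t hsub)); by apply/cut_iff.
    have := L _ HB1; rewrite cardsU1; move/(_ ltac:(case: (a \in B) => /=; lia)).
    move=> /subsetP /(_ a) Hs; apply: (negP HaC); apply: (In_R Ha); apply: Hs.
    by apply: (subsetP (sub_R tail head t (a |: B))); rewrite setU11.
  move=> B [HB Hmin]; apply/cut_iff.
  have HBr : (#|B| <= r)%N by rewrite -HCr; apply: Hmin; apply/cut_iff; apply: sub_R tail head t _.
  exact: subset_trans (sub_R tail head t B) (L B HB HBr).
have HAC := HA C (conj HCr Hprim).
apply/eqP; rewrite -submx0.
apply: submx_trans (capmxS (submx_refl _) (Delta_sub Hac Hf HCc)) _.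
by rewrite HAC submx0.
Qed.
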